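(* Any two butterfly algebras are isometric and isomorphic as Lie algebras; that is, for any two butterfly algebras there is a Lie algebra isomorphism between them which is an isometry of the invariant bilinear forms.
   Context: A butterfly algebra is a real 2-step nilpotent Lie algebra $\mathfrak{b}_6$ (i.e. $[\mathfrak{b}_6,[\mathfrak{b}_6,\mathfrak{b}_6]]=0$) of dimension $6$, endowed with a symmetric bilinear form $(\cdot,\cdot)$ that is invariant, i.e. $([X,Y],Z)=-(Y,[X,Z])$ for all $X,Y,Z$, such that there exists $Z\in[\mathfrak{b}_6,\mathfrak{b}_6]$ not lying in the radical $\mathfrak{r}=\{X\in\mathfrak{b}_6\mid (X,\mathfrak{b}_6)=0\}$. *)

(* Defs.v *)
From HB Require Import structures.
From mathcomp Require Import all_boot all_order all_algebra.
From mathcomp Require Import reals.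
Set Implicit Arguments. Unset Strict Implicit. Unset Printing Implicit Defensive.
Import Order.TTheory GRing.Theory Num.Theory.
Local Open Scope ring_scope.

(* Z lies in the derived algebra [b,b] = linear span of all brackets [X,Y];
   since brackets are bilinear, the span is the set of finite sums of brackets. *)
Definition in_derived (R : realType) (V : vectType R) (br : V -> V -> V)
  (Z : V) : Prop :=
  exists s : seq (V * V), Z = \sum_(p <- s) br p.1 p.2.

Definition in_radical (R : realType) (V : vectType R) (B : V -> V -> R)
  (X : V) : Prop := forall Y : V, B X Y = 0.

Definition is_lie_algebra (R : realType) (V : vectType R) (br : V -> V -> V)
  : Prop :=
  [/\ (forall (a : R) (x y z : V), br (a *: x + y) z = a *: br x z + br y z),
      (forall (a : R) (x y z : V), br z (a *: x + y) = a *: br z x + br z y),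
      (forall x : V, br x x = 0) &
      (forall x y z : V, br x (br y z) + br y (br z x) + br z (br x y) = 0)].

Definition is_sym_bilinear (R : realType) (V : vectType R) (B : V -> V -> R)
  : Prop :=
  [/\ (forall (a : R) (x y z : V), B (a *: x + y) z = a * B x z + B y z),
      (forall (a : R) (x y z : V), B z (a *: x + y) = a * B z x + B z y) &
      (forall x y : V, B x y = B y x)].

Definition is_butterfly (R : realType) (V : vectType R) (br : V -> V -> V)
  (B : V -> V -> R) : Prop :=
  [/\ \dim (fullv : {vspace V}) = 6%N,
      is_lie_algebra br &
   [/\ (forall x y z : V, br x (br y z) = 0),
      is_sym_bilinear B,
      (forall x y z : V, B (br x y) z = - B y (br x z)) &
      (exists Z : V, in_derived br Z /\ ~ in_radical B Z)]].

(* Main.v *)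
Require Import Defs.
From HB Require Import structures.
From mathcomp Require Import all_boot all_order all_algebra.
From mathcomp Require Import reals.
From mathcomp Require Import ring lra.
From Stdlib Require Import Classical.
Import GRing.Theory Num.Theory.
Local Open Scope ring_scope.

Definition Tab (R : realType) (V : vectType R) (B : V -> V -> R) (x1 x2 x3 z1 z2 z3 : V) : Prop :=
B x1 x1 = 0 /\ B x1 x2 = 0 /\ B x1 x3 = 0 /\ B x1 z1 = 1 /\ B x1 z2 = 0 /\ B x1 z3 = 0 /\ B x2 x1 = 0 /\ B x2 x2 = 0 /\ B x2 x3 = 0 /\ B x2 z1 = 0 /\ B x2 z2 = 1 /\ B x2 z3 = 0 /\ B x3 x1 = 0 /\ B x3 x2 = 0 /\ B x3 x3 = 0 /\ B x3 z1 = 0 /\ B x3 z2 = 0 /\ B x3 z3 = 1 /\ B z1 x1 = 1 /\ B z1 x2 = 0 /\ B z1 x3 = 0 /\ B z1 z1 = 0 /\ B z1 z2 = 0 /\ B z1 z3 = 0 /\ B z2 x1 = 0 /\ B z2 x2 = 1 /\ B z2 x3 = 0 /\ B z2 z1 = 0 /\ B z2 z2 = 0 /\ B z2 z3 = 0 /\ B z3 x1 = 0 /\ B z3 x2 = 0 /\ B z3 x3 = 1 /\ B z3 z1 = 0 /\ B z3 z2 = 0 /\ B z3 z3 = 0.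

Arguments Tab {R V}.

Ltac splitall := repeat match goal with H : _ /\ _ |- _ => destruct H end.
Ltac tab := repeat match goal with H : ?B ?p ?q = ?r |- context [?B ?p ?q] => rewrite H end.

Section SB.
Variables (R : realType) (V : vectType R) (B : V -> V -> R).
Hypothesis HSB : is_sym_bilinear B.

Lemma Bsym x y : B x y = B y x.
Proof. by case: HSB. Qed.
Lemma BDl x y z : B (x + y) z = B x z + B y z.
Proof. by case: HSB => h _ _; have := h 1 x y z; rewrite scale1r mul1r. Qed.
Lemma B0l z : B 0 z = 0.
Proof. have := BDl 0 0 z; rewrite addr0 => h; lra. Qed.
Lemma BZl a x z : B (a *: x) z = a * B x z.
Proof. by case: HSB => h _ _; have := h a x 0 z; rewrite addr0 B0l addr0. Qed.
Lemma BNl x z : B (- x) z = - B x z.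
Proof. by rewrite -scaleN1r BZl mulN1r. Qed.
Lemma BDr x y z : B z (x + y) = B z x + B z y.
Proof. by rewrite !(Bsym z) BDl. Qed.
Lemma B0r z : B z 0 = 0.
Proof. by rewrite Bsym B0l. Qed.
Lemma BZr a x z : B z (a *: x) = a * B z x.
Proof. by rewrite !(Bsym z) BZl. Qed.
Lemma BNr x z : B z (- x) = - B z x.
Proof. by rewrite !(Bsym z) BNl. Qed.
Lemma Bsum I (s : seq I) (F : I -> V) z :
  B (\sum_(i <- s) F i) z = \sum_(i <- s) B (F i) z.
Proof.
by elim: s => [|i s IH]; rewrite ?big_nil ?B0l // !big_cons BDl IH.
Qed.

Lemma span6 (dim6 : \dim (fullv : {vspace V}) = 6%N) x1 x2 x3 z1 z2 z3 :
  Tab B x1 x2 x3 z1 z2 z3 -> forall v,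
  v = B v z1 *: x1 + B v z2 *: x2 + B v z3 *: x3
      + B v x1 *: z1 + B v x2 *: z2 + B v x3 *: z3.
Proof.
move=> T v; rewrite /Tab in T; splitall.
pose X := [tuple x1; x2; x3; z1; z2; z3].
pose D := [tuple z1; z2; z3; x1; x2; x3].
have XD (i j : 'I_6) : B X`_j D`_i = (j == i)%:R.
  move: i j => [[|[|[|[|[|[|//]]]]]] ?] [[|[|[|[|[|[|//]]]]]] ?];
  rewrite -val_eqE /=; tab; by [].
have Hi (k : 'I_6 -> R) (i : 'I_6) : B (\sum_(j < 6) k j *: X`_j) D`_i = k i.
  rewrite Bsum (bigD1 i) //= BZl XD eqxx mulr1 big1 ?addr0 // => j /negPf ji.
  by rewrite BZl XD ji mulr0.
have fX : free X.
  apply/freeP => k Hk i; have := Hi k i; by rewrite Hk B0l.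
have dX : \dim <<X>> = 6%N by move/eqP: fX.
have XF : <<X>>%VS = fullv by apply/eqP; rewrite eqEdim subvf dX dim6.
have vX : v \in <<X>>%VS by rewrite XF memvf.
have Ev := coord_span vX.
have Ec (i : 'I_6) : coord X i v = B v D`_i by rewrite {2}Ev Hi.
rewrite {1}Ev (eq_bigr (fun i : 'I_6 => B v D`_i *: X`_i)); last by move=> i _; rewrite Ec.
by rewrite !big_ord_recr big_ord0 /= add0r.
Qed.

Lemma tcoord y1 y2 y3 w1 w2 w3 : Tab B y1 y2 y3 w1 w2 w3 -> forall c1 c2 c3 c4 c5 c6 : R,
  let f := c1 *: y1 + c2 *: y2 + c3 *: y3 + c4 *: w1 + c5 *: w2 + c6 *: w3 in
  [/\ B f w1 = c1, B f w2 = c2, B f w3 = c3, B f y1 = c4 & (B f y2 = c5 /\ B f y3 = c6)].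
Proof.
move=> T c1 c2 c3 c4 c5 c6 f; rewrite /Tab in T; splitall.
by rewrite /f; repeat split; rewrite !(BDl, BZl); tab; ring.
Qed.

Section Lie.
Variable br : V -> V -> V.
Hypothesis HB : is_butterfly br B.
Lemma HBlie : is_lie_algebra br. Proof. by case: HB. Qed.
Lemma HBdim : \dim (fullv : {vspace V}) = 6%N. Proof. by case: HB. Qed.
Lemma HBrest : [/\ (forall x y z : V, br x (br y z) = 0),
      is_sym_bilinear B,
      (forall x y z : V, B (br x y) z = - B y (br x z)) &
      (exists Z : V, in_derived br Z /\ ~ in_radical B Z)].
Proof. by case: HB. Qed.

Lemma brDl x y z : br (x + y) z = br x z + br y z.
Proof. by have [h _ _ _] := HBlie; have := h 1 x y z; rewrite !scale1r. Qed.
Lemma brDr x y z : br z (x + y) = br z x + br z y.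
Proof. by have [_ h _ _] := HBlie; have := h 1 x y z; rewrite !scale1r. Qed.
Lemma br0l z : br 0 z = 0.
Proof. by have := brDl 0 0 z; rewrite addr0 => /esym/eqP; rewrite -subr_eq0 addrK => /eqP. Qed.
Lemma br0r z : br z 0 = 0.
Proof. by have := brDr 0 0 z; rewrite addr0 => /esym/eqP; rewrite -subr_eq0 addrK => /eqP. Qed.
Lemma brZl a x z : br (a *: x) z = a *: br x z.
Proof. by have [h _ _ _] := HBlie; have := h a x 0 z; rewrite addr0 br0l addr0. Qed.
Lemma brZr a x z : br z (a *: x) = a *: br z x.
Proof. by have [_ h _ _] := HBlie; have := h a x 0 z; rewrite addr0 br0r addr0. Qed.
Lemma brNl x z : br (- x) z = - br x z.
Proof. by rewrite -scaleN1r brZl scaleN1r. Qed.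
Lemma brNr x z : br z (- x) = - br z x.
Proof. by rewrite -scaleN1r brZr scaleN1r. Qed.
Lemma brxx x : br x x = 0.
Proof. by have [_ _ h _] := HBlie. Qed.
Lemma brA x y : br x y = - br y x.
Proof.
have := brxx (x + y); rewrite brDl !brDr !brxx add0r addr0 => /eqP.
by rewrite addr_eq0 => /eqP.
Qed.
Lemma nil2 x y z : br x (br y z) = 0.
Proof. by have [h _ _ _] := HBrest. Qed.
Lemma nil2l x y z : br (br y z) x = 0.
Proof. by rewrite brA nil2 oppr0. Qed.
Lemma inv x y z : B (br x y) z = - B y (br x z).
Proof. by have [_ _ h _] := HBrest. Qed.
Lemma phi23 u v t : B (br u v) t = - B (br u t) v.
Proof. by rewrite inv Bsym. Qed.
Lemma phi12 u v t : B (br u v) t = - B (br v u) t.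
Proof. by rewrite brA BNl. Qed.
Lemma phicyc u v t : B (br u v) t = B (br v t) u.
Proof. by rewrite phi12 phi23 opprK. Qed.
Lemma phivv u v : B (br u v) v = 0.
Proof. have := phi23 u v v; lra. Qed.
Lemma phiuu u v : B (br u v) u = 0.
Proof. by rewrite phicyc phivv. Qed.
Lemma phibr u v a b : B (br u v) (br a b) = 0.
Proof. by rewrite inv nil2 B0r oppr0. Qed.

Lemma Bbr_sym x a b : B x (br a b) = B (br a b) x.
Proof. exact: Bsym. Qed.

Lemma brform x1 x2 x3 z1 z2 z3 : Tab B x1 x2 x3 z1 z2 z3 ->
  br x1 x2 = z3 -> br x2 x3 = z1 -> br x3 x1 = z2 ->
  (forall v, br z1 v = 0) -> (forall v, br z2 v = 0) -> (forall v, br z3 v = 0) ->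
  forall u v, br u v = (B u z2 * B v z3 - B u z3 * B v z2) *: z1
     + (B u z3 * B v z1 - B u z1 * B v z3) *: z2
     + (B u z1 * B v z2 - B u z2 * B v z1) *: z3.
Proof.
move=> T h12 h23 h31 c1 c2 c3 u v.
have N := @span6 HBdim x1 x2 x3 z1 z2 z3 T.
have a1 : B (br u v) z1 = 0 by rewrite inv (brA u z1) c1 oppr0 B0r oppr0.
have a2 : B (br u v) z2 = 0 by rewrite inv (brA u z2) c2 oppr0 B0r oppr0.
have a3 : B (br u v) z3 = 0 by rewrite inv (brA u z3) c3 oppr0 B0r oppr0.
have b1 : B (br u v) x1 = (B u z2 * B v z3 - B u z3 * B v z2).
  rewrite inv {1}(N u) !brDl !brZl brxx (brA x2 x1) h12 h31 !c1 !c2 !c3.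
  rewrite !(BDr, BZr, BNr, B0r); ring.
have b2 : B (br u v) x2 = (B u z3 * B v z1 - B u z1 * B v z3).
  rewrite inv {1}(N u) !brDl !brZl brxx (brA x3 x2) h12 h23 !c1 !c2 !c3.
  rewrite !(BDr, BZr, BNr, B0r); ring.
have b3 : B (br u v) x3 = (B u z1 * B v z2 - B u z2 * B v z1).
  rewrite inv {1}(N u) !brDl !brZl brxx (brA x1 x3) h31 h23 !c1 !c2 !c3.
  rewrite !(BDr, BZr, BNr, B0r); ring.
by rewrite {1}(N (br u v)) a1 a2 a3 b1 b2 b3 !scale0r !add0r.
Qed.

Lemma construct X1 X2 X3 : B (br X1 X2) X3 = 1 ->
  let z1 := br X2 X3 in let z2 := br X3 X1 in let z3 := br X1 X2 in
  let x1 := X1 - 2^-1 *: (B X1 X1 *: z1 + B X1 X2 *: z2 + B X1 X3 *: z3) in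
  let x2 := X2 - 2^-1 *: (B X2 X1 *: z1 + B X2 X2 *: z2 + B X2 X3 *: z3) in
  let x3 := X3 - 2^-1 *: (B X3 X1 *: z1 + B X3 X2 *: z2 + B X3 X3 *: z3) in
  Tab B x1 x2 x3 z1 z2 z3 /\
  [/\ br x1 x2 = z3, br x2 x3 = z1, br x3 x1 = z2 &
   [/\ (forall v, br z1 v = 0), (forall v, br z2 v = 0) & (forall v, br z3 v = 0)]].
Proof.
move=> p123 z1 z2 z3 x1 x2 x3.
have p231 : B (br X2 X3) X1 = 1 by rewrite -phicyc.
have p312 : B (br X3 X1) X2 = 1 by rewrite -phicyc -phicyc.
have p213 : B (br X2 X1) X3 = -1 by rewrite phi12 p123.
have p132 : B (br X1 X3) X2 = -1 by rewrite phi12 p312.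
have p321 : B (br X3 X2) X1 = -1 by rewrite phi12 p231.
split.
  rewrite /Tab /x1 /x2 /x3 /z1 /z2 /z3.
  have t2 : (2 : R) != 0 by rewrite pnatr_eq0.
  repeat split; rewrite ?(BDl, BDr, BNl, BNr, BZl, BZr) ?phibr ?Bbr_sym ?phivv ?phiuu
    ?brxx ?B0l ?p123 ?p231 ?p312 ?p213 ?p132 ?p321 ?(Bsym X2 X1) ?(Bsym X3 X1) ?(Bsym X3 X2);
    field; by [].
(split; last split); rewrite /x1 /x2 /x3 /z1 /z2 /z3;
  try by move=> v; rewrite nil2l.
all: rewrite !(brDl, brDr, brNl, brNr, brZl, brZr) ?nil2 ?nil2l;
  by rewrite ?(scaler0, oppr0, addr0, add0r, subr0).
Qed.

Lemma normal_form : exists x1 x2 x3 z1 z2 z3 : V, Tab B x1 x2 x3 z1 z2 z3 /\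
  (forall v, v = B v z1 *: x1 + B v z2 *: x2 + B v z3 *: x3
      + B v x1 *: z1 + B v x2 *: z2 + B v x3 *: z3) /\
  (forall u v, br u v = (B u z2 * B v z3 - B u z3 * B v z2) *: z1
     + (B u z3 * B v z1 - B u z1 * B v z3) *: z2
     + (B u z1 * B v z2 - B u z2 * B v z1) *: z3).
Proof.
have [Z [[s HZ] HnR]] : exists Z, in_derived br Z /\ ~ in_radical B Z by case: HBrest.
have [x [y [w Hw]]] : exists x y w, B (br x y) w <> 0.
  apply: NNPP => Hn; apply: HnR => Y; rewrite HZ Bsum big1 // => p _.
  apply: NNPP => Hp; apply: Hn; by exists p.1, p.2, Y.
have H1 : B (br ((B (br x y) w)^-1 *: x) y) w = 1.
  by rewrite brZl BZl mulVf //; apply/eqP.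
have [T [h12 h23 h31 [c1 c2 c3]]] := construct _ _ _ H1.
do 6 eexists; split; first exact: T.
split; first exact: (@span6 HBdim _ _ _ _ _ _ T).
exact: (@brform _ _ _ _ _ _ T) h12 h23 h31 c1 c2 c3.
Qed.

End Lie.
End SB.
Arguments normal_form {R V B} HSB {br} HB.
Arguments tcoord {R V B} HSB {y1 y2 y3 w1 w2 w3} _ c1 c2 c3 c4 c5 c6.
Arguments BDl {R V B} HSB x y z.
Arguments BZl {R V B} HSB a x z.
Arguments Bsym {R V B} HSB x y.

Lemma lin_step (R : realType) (W : vectType R) (a : R) (P p Q q : W) :
  a *: (P + p) + (Q + q) = (a *: P + Q) + (a *: p + q).
Proof. by rewrite scalerDr addrACA. Qed.

Theorem corollary5p4 (R : realType) (V W : vectType R)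
  (brV : V -> V -> V) (BV : V -> V -> R)
  (brW : W -> W -> W) (BW : W -> W -> R) :
  is_butterfly brV BV -> is_butterfly brW BW ->
  exists f : V -> W,
    [/\ (forall (a : R) (x y : V), f (a *: x + y) = a *: f x + f y),
        bijective f,
        (forall x y : V, f (brV x y) = brW (f x) (f y)) &
        (forall x y : V, BW (f x) (f y) = BV x y)].
Proof.
move=> hV hW.
have sbV : is_sym_bilinear BV by case: hV => _ _ [].
have sbW : is_sym_bilinear BW by case: hW => _ _ [].
have [x1 [x2 [x3 [z1 [z2 [z3 [TV [NV brV']]]]]]]] := normal_form sbV hV.
have [y1 [y2 [y3 [w1 [w2 [w3 [TW [NW brW']]]]]]]] := normal_form sbW hW.
pose f v := BV v z1 *: y1 + BV v z2 *: y2 + BV v z3 *: y3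
  + BV v x1 *: w1 + BV v x2 *: w2 + BV v x3 *: w3.
pose g w := BW w w1 *: x1 + BW w w2 *: x2 + BW w w3 *: x3
  + BW w y1 *: z1 + BW w y2 *: z2 + BW w y3 *: z3.
have fc v : [/\ BW (f v) w1 = BV v z1, BW (f v) w2 = BV v z2, BW (f v) w3 = BV v z3,
   BW (f v) y1 = BV v x1 & (BW (f v) y2 = BV v x2 /\ BW (f v) y3 = BV v x3)].
  exact: (tcoord sbW TW).
have gc w : [/\ BV (g w) z1 = BW w w1, BV (g w) z2 = BW w w2, BV (g w) z3 = BW w w3,
   BV (g w) x1 = BW w y1 & (BV (g w) x2 = BW w y2 /\ BV (g w) x3 = BW w y3)].
  exact: (tcoord sbV TV).
exists f; split.
- move=> a x y; rewrite /f !lin_step !scalerA -!scalerDl.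
  by rewrite !(BDl sbV, BZl sbV).
- exists g => [v|w].
    have [e1 e2 e3 e4 [e5 e6]] := fc v.
    by rewrite /g e1 e2 e3 e4 e5 e6 -NV.
  have [e1 e2 e3 e4 [e5 e6]] := gc w.
  by rewrite /f e1 e2 e3 e4 e5 e6 -NW.
- move=> u v.
  have [e1 e2 e3 e4 [e5 e6]] := fc u.
  have [d1 d2 d3 d4 [d5 d6]] := fc v.
  rewrite [RHS]brW' e1 e2 e3 d1 d2 d3.
  rewrite /f brV'; rewrite /Tab in TV; splitall.
  rewrite !(BDl sbV, BZl sbV); tab.
  by rewrite ?(mulr0, mulr1, addr0, add0r, scale0r).
- move=> u v.
  have EV : BV u v = BV u z1 * BV v x1 + BV u z2 * BV v x2 + BV u z3 * BV v x3
     + BV u x1 * BV v z1 + BV u x2 * BV v z2 + BV u x3 * BV v z3.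
    rewrite {1}(NV u) !(BDl sbV, BZl sbV).
    by rewrite !(Bsym sbV _ v).
  have [d1 d2 d3 d4 [d5 d6]] := fc v.
  rewrite EV [f u]/f !(BDl sbW, BZl sbW) !(Bsym sbW _ (f v)) d1 d2 d3 d4 d5 d6.
  ring.
Qed.
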